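(* Let $(X,d_X)$ and $(Y,d_Y)$ be separable metric spaces with $X$ zero-dimensional, and let $\xi$ be a nonzero countable ordinal. A function $f:X\to Y$ is of Baire class $\xi$ if and only if there is a sequence of functions $X\to Y$ converging uniformly to $f$ such that each of them is locally constant on some $\mathbf{\Pi}^0_\xi$-partition of $X$. The same equivalence holds with ''locally constant'' replaced by ''locally Lipschitz'', and also with ''locally constant'' replaced by ''locally continuous''.
   Context: Work in ZF plus countable choice over the reals. $f$ is of Baire class $1$ if $f^{-1}(U)\in\mathbf{\Sigma}^0_2(X)$ for every open $U\subseteq Y$; for $1<\xi<\omega_1$, $f$ is of Baire class $\xi$ if it is the pointwise limit of functions $f_n:X\to Y$ each of Baire class $\xi_n$ for some $1\le\xi_n<\xi$. A $\mathbf{\Pi}^0_\xi$-partition of $X$ is a family $\langle C_n:n<N\rangle$, $1\le N\le\omega$, of nonempty pairwise disjoint sets in $\mathbf{\Pi}^0_\xi(X)$ whose union is $X$. A function $g:X\to Y$ is locally constant (resp. Lipschitz, continuous) on such a partition if there are constant (resp. Lipschitz, continuous) functions $g_n:X\to Y$ with $g\restriction C_n=g_n\restriction C_n$ for all $n<N$. *)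

(* Defs.v *)
From Stdlib Require Import Reals.
Open Scope R_scope.

(* Semantics: |OZ| = 0, |OS x| = |x|+1, |OL f| = sup_n |f n|.
   Every countable ordinal is denoted by some tree. *)
Inductive Ord : Type :=
| OZ : Ord
| OS : Ord -> Ord
| OL : (nat -> Ord) -> Ord.

(* ord_le x y  <->  |x| <= |y| ;  ord_lt x y <-> |x| < |y| *)
Fixpoint ord_le (x y : Ord) {struct x} : Prop :=
  match x with
  | OZ => True
  | OS x' =>
      (fix lt' (y : Ord) : Prop :=
         match y with
         | OZ => False
         | OS y' => ord_le x' y'
         | OL g => exists n, lt' (g n)
         end) y
  | OL f => forall n, ord_le (f n) y
  end.

Definition ord_lt (x y : Ord) : Prop := ord_le (OS x) y.

Definition ord_one : Ord := OS OZ.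
Definition ord_two : Ord := OS (OS OZ).

Definition is_metric {X : Type} (d : X -> X -> R) : Prop :=
  (forall x y, d x y = 0 <-> x = y) /\
  (forall x y, d x y = d y x) /\
  (forall x y z, d x z <= d x y + d y z).

(* separable: a countable dense subset (possibly empty, as an option-valued enumeration) *)
Definition separable {X : Type} (d : X -> X -> R) : Prop :=
  exists s : nat -> option X,
    forall x e, 0 < e -> exists n y, s n = Some y /\ d x y < e.

Definition mopen {X : Type} (d : X -> X -> R) (U : X -> Prop) : Prop :=
  forall x, U x -> exists r, 0 < r /\ forall y, d x y < r -> U y.

Definition mclosed {X : Type} (d : X -> X -> R) (F : X -> Prop) : Prop :=
  mopen d (fun x => ~ F x).

Definition zero_dimensional {X : Type} (d : X -> X -> R) : Prop :=
  forall (U : X -> Prop) x, mopen d U -> U x ->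
    exists V : X -> Prop, mopen d V /\ mclosed d V /\ V x /\
      (forall y, V y -> U y).

(* Sigma^0_1 = open sets; for xi > 1, Sigma^0_xi = countable unions of sets in
   Pi^0_eta for some 1 <= eta < xi;  Pi^0_xi = complements of Sigma^0_xi. *)
Inductive Sigma0 {X : Type} (d : X -> X -> R) : Ord -> (X -> Prop) -> Prop :=
| Sigma0_open (xi : Ord) (A : X -> Prop) :
    ord_lt OZ xi -> ord_le xi ord_one -> mopen d A -> Sigma0 d xi A
| Sigma0_union (xi : Ord) (eta : nat -> Ord) (B : nat -> X -> Prop) :
    (forall n, ord_lt OZ (eta n)) -> (forall n, ord_lt (eta n) xi) ->
    (forall n, Sigma0 d (eta n) (B n)) ->
    Sigma0 d xi (fun x => exists n, ~ B n x).

Definition Pi0 {X : Type} (d : X -> X -> R) (xi : Ord) (A : X -> Prop) : Prop :=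
  Sigma0 d xi (fun x => ~ A x).

Definition pointwise_cv {X Y : Type} (dY : Y -> Y -> R)
  (fn : nat -> X -> Y) (f : X -> Y) : Prop :=
  forall x e, 0 < e -> exists N, forall n, (N <= n)%nat -> dY (fn n x) (f x) < e.

Definition uniform_cv {X Y : Type} (dY : Y -> Y -> R)
  (fn : nat -> X -> Y) (f : X -> Y) : Prop :=
  forall e, 0 < e -> exists N, forall n, (N <= n)%nat -> forall x, dY (fn n x) (f x) < e.

Inductive BaireClass {X Y : Type} (dX : X -> X -> R) (dY : Y -> Y -> R) :
  Ord -> (X -> Y) -> Prop :=
| Baire_one (xi : Ord) (f : X -> Y) :
    ord_lt OZ xi -> ord_le xi ord_one ->
    (forall U, mopen dY U -> Sigma0 dX ord_two (fun x => U (f x))) ->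
    BaireClass dX dY xi f
| Baire_lim (xi : Ord) (eta : nat -> Ord) (fn : nat -> X -> Y) (f : X -> Y) :
    ord_lt ord_one xi ->
    (forall n, ord_lt OZ (eta n)) -> (forall n, ord_lt (eta n) xi) ->
    (forall n, BaireClass dX dY (eta n) (fn n)) ->
    pointwise_cv dY fn f ->
    BaireClass dX dY xi f.

(* A family <C_n : n < N>, 1 <= N <= omega; N = None encodes omega. *)
Definition in_index (N : option nat) (n : nat) : Prop :=
  match N with Some k => (n < k)%nat | None => True end.

Definition Pi_partition {X : Type} (dX : X -> X -> R) (xi : Ord)
  (N : option nat) (C : nat -> X -> Prop) : Prop :=
  in_index N 0 /\
  (forall n, in_index N n -> exists x, C n x) /\
  (forall n, in_index N n -> Pi0 dX xi (C n)) /\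
  (forall n m x, in_index N n -> in_index N m -> C n x -> C m x -> n = m) /\
  (forall x, exists n, in_index N n /\ C n x).

Definition is_constant {X Y : Type} (g : X -> Y) : Prop :=
  exists y, forall x, g x = y.

Definition is_lipschitz {X Y : Type} (dX : X -> X -> R) (dY : Y -> Y -> R)
  (g : X -> Y) : Prop :=
  exists L, 0 <= L /\ forall x x', dY (g x) (g x') <= L * dX x x'.

Definition is_continuous {X Y : Type} (dX : X -> X -> R) (dY : Y -> Y -> R)
  (g : X -> Y) : Prop :=
  forall x e, 0 < e -> exists r, 0 < r /\
    forall x', dX x x' < r -> dY (g x) (g x') < e.

Definition locally_on {X Y : Type} (P : (X -> Y) -> Prop)
  (N : option nat) (C : nat -> X -> Prop) (g : X -> Y) : Prop :=
  exists gn : nat -> X -> Y,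
    forall n, in_index N n -> P (gn n) /\ forall x, C n x -> g x = gn n x.

Definition unif_limit_piecewise {X Y : Type} (dX : X -> X -> R) (dY : Y -> Y -> R)
  (xi : Ord) (P : (X -> Y) -> Prop) (f : X -> Y) : Prop :=
  exists fk : nat -> X -> Y,
    uniform_cv dY fk f /\
    forall k, exists N C, Pi_partition dX xi N C /\ locally_on P N C (fk k).

(* Main.v *)
Require Import Defs.
From Stdlib Require Import Reals Lra Lia Classical ClassicalDescription ClassicalEpsilon FunctionalExtensionality PropExtensionality Cantor PeanoNat Wf_nat Compare_dec.
Open Scope R_scope.

Fixpoint ltO (x y : Ord) {struct y} : Prop :=
  match y with
  | OZ => False
  | OS y' => ord_le x y'
  | OL g => exists n, ltO x (g n)
  end.

Lemma ord_le_OS x y : ord_le (OS x) y = ltO x y.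
Proof. induction y; simpl; auto. f_equal. apply functional_extensionality; intro n.
 apply propositional_extensionality. rewrite <- H. tauto. Qed.

Lemma ord_lt_ltO x y : ord_lt x y <-> ltO x y.
Proof. unfold ord_lt. rewrite ord_le_OS. tauto. Qed.

Lemma le_OL x g n : ord_le x (g n) -> ord_le x (OL g).
Proof.
  revert g n. induction x as [|x IH|f IH]; intros g n H.
  - exact I.
  - rewrite ord_le_OS in *. simpl. eauto.
  - simpl in *. intro m. eapply IH; eauto.
Qed.

Lemma ltO_le_S : forall y, (forall x, ltO x y -> ord_le x y) /\ (forall x, ord_le x y -> ord_le x (OS y)).
Proof.
  induction y as [|y IH|g IH].
  - split; [simpl; tauto|]. intros x H. induction x as [|x IHx|f IHx].
    + exact I.
    + rewrite ord_le_OS in *. simpl in H. contradiction.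
    + simpl in *. intro n. apply IHx. apply H.
  - assert (A : forall x, ltO x (OS y) -> ord_le x (OS y)).
    { simpl. intros x H. apply (proj2 IH). exact H. }
    split; [exact A|].
    intro x. induction x as [|x IHx|f IHx]; intro H.
    + exact I.
    + rewrite ord_le_OS in *. simpl in *. apply A. exact H.
    + simpl in *. intro n. apply IHx. apply H.
  - assert (A : forall x, ltO x (OL g) -> ord_le x (OL g)).
    { simpl. intros x [n H]. apply le_OL with n. apply (proj1 (IH n)). exact H. }
    split; [exact A|].
    intro x. induction x as [|x IHx|f IHx]; intro H.
    + exact I.
    + rewrite ord_le_OS in *. simpl. apply A. exact H.
    + simpl in *. intro n. apply IHx. apply H.
Qed.

Lemma ltO_le x y : ltO x y -> ord_le x y.
Proof. apply ltO_le_S. Qed.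
Lemma le_S x y : ord_le x y -> ord_le x (OS y).
Proof. apply ltO_le_S. Qed.

Lemma ord_le_refl x : ord_le x x.
Proof.
  induction x as [|x IH|f IH].
  - exact I.
  - rewrite ord_le_OS. exact IH.
  - simpl. intro n. apply le_OL with n. apply IH.
Qed.

Lemma ord_le_trans x : forall y z, ord_le x y -> ord_le y z -> ord_le x z.
Proof.
  induction x as [|x IH|f IH]; intros y z H1 H2.
  - exact I.
  - rewrite ord_le_OS in *.
    assert (K : forall y z, ord_le x y -> ltO y z -> ltO x z).
    { clear -IH. intros y z. induction z as [|z IHz|g IHz]; simpl; intros A B.
      - exact B.
      - eauto.
      - destruct B as [n B]. exists n. eauto. }
    revert z H1 H2. induction y as [|y IHy|g IHy]; intros z H1 H2.
    + simpl in H1. contradiction.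
    + simpl in H1. rewrite ord_le_OS in H2. eapply K; eauto.
    + simpl in H1. destruct H1 as [n H1]. simpl in H2. eapply IHy; eauto.
  - simpl in *. intro n. eapply IH; eauto.
Qed.

Lemma ord_lt_le x y : ord_lt x y -> ord_le x y.
Proof. intro H. apply ord_lt_ltO in H. apply ltO_le. exact H. Qed.

Lemma ord_lt_le_trans x y z : ord_lt x y -> ord_le y z -> ord_lt x z.
Proof. unfold ord_lt. intros; eapply ord_le_trans; eauto. Qed.

Lemma ord_le_lt_trans x y z : ord_le x y -> ord_lt y z -> ord_lt x z.
Proof. unfold ord_lt. intros A B. eapply ord_le_trans; [|exact B].
  rewrite ord_le_OS. simpl. exact A. Qed.

Lemma ord_lt_trans x y z : ord_lt x y -> ord_lt y z -> ord_lt x z.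
Proof. intros A B. eapply ord_lt_le_trans; eauto using ord_lt_le. Qed.

Lemma ord_lt_S x : ord_lt x (OS x).
Proof. unfold ord_lt. rewrite ord_le_OS. simpl. apply ord_le_refl. Qed.

Lemma ord_le_S x : ord_le x (OS x).
Proof. apply le_S, ord_le_refl. Qed.

Lemma ord_S_mono x y : ord_le x y -> ord_le (OS x) (OS y).
Proof. rewrite ord_le_OS. simpl. auto. Qed.

Lemma ord_total x : forall y, ord_le x y \/ ord_lt y x.
Proof.
  induction x as [|x IH|f IH]; intro y.
  - left; exact I.
  - rewrite ord_le_OS. setoid_rewrite ord_lt_ltO.
    induction y as [|y IHy|g IHy].
    + right. simpl. exact I.
    + change (ord_le x y \/ ord_le (OS y) x). rewrite ord_le_OS.
      destruct (IH y) as [A|A]; [left|right]; auto.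
      apply ord_lt_ltO. exact A.
    + destruct (classic (exists n, ltO x (g n))) as [A|A].
      * left. exact A.
      * right. simpl. intro n. destruct (IHy n) as [B|B].
        -- exfalso; eauto.
        -- exact B.
  - destruct (classic (forall n, ord_le (f n) y)) as [A|A].
    + left. exact A.
    + apply not_all_ex_not in A. destruct A as [n A].
      destruct (IH n y) as [B|B]; [contradiction|]. right.
      apply ord_lt_ltO in B. apply ord_lt_ltO. simpl. eauto.
Qed.

Lemma ord_wf : well_founded ord_lt.
Proof.
  assert (K : forall x y, ord_le y x -> Acc ord_lt y).
  { induction x as [|x IH|f IH]; intros y Hy; constructor; intros z Hz;
      unfold ord_lt in Hz.
    - pose proof (ord_le_trans _ _ _ Hz Hy) as H. rewrite ord_le_OS in H. simpl in H. contradiction.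
    - pose proof (ord_le_trans _ _ _ Hz Hy) as H. rewrite ord_le_OS in H. simpl in H. eauto.
    - pose proof (ord_le_trans _ _ _ Hz Hy) as H. rewrite ord_le_OS in H. simpl in H.
      destruct H as [n H]. apply (IH n). apply ltO_le. exact H. }
  intro x. apply (K x x), ord_le_refl.
Qed.

Lemma ord_bound_fin (xi : Ord) (h : nat -> Ord) (b : Ord) :
  ord_lt b xi -> (forall i, ord_lt (h i) xi) ->
  forall m, exists c, ord_lt c xi /\ ord_le b c /\ forall i, (i <= m)%nat -> ord_le (h i) c.
Proof.
  intros Hb Hh. induction m as [|m IH].
  - destruct (ord_total (h 0%nat) b) as [A|A].
    + exists b. split; [auto|split; [apply ord_le_refl|]]. intros i Hi. replace i with 0%nat by lia. auto.
    + exists (h 0%nat). split; [auto|split; [apply ord_lt_le; auto|]].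
      intros i Hi. replace i with 0%nat by lia. apply ord_le_refl.
  - destruct IH as [c [H1 [H2 H3]]].
    destruct (ord_total (h (S m)) c) as [A|A].
    + exists c. split; [auto|split; [auto|]]. intros i Hi. destruct (Nat.eq_dec i (S m)); subst; auto.
      apply H3; lia.
    + exists (h (S m)). split; [auto|split].
      * eapply ord_le_trans; eauto using ord_lt_le.
      * intros i Hi. destruct (Nat.eq_dec i (S m)); subst; [apply ord_le_refl|].
        eapply ord_le_trans; [apply H3; lia| apply ord_lt_le; auto].
Qed.

Lemma ord_lt_one_bad eta xi : ord_lt OZ eta -> ord_lt eta xi -> ord_le xi ord_one -> False.
Proof.
  intros A B C. unfold ord_lt in *. pose proof (ord_le_trans _ _ _ B C) as H.
  unfold ord_one in H. rewrite ord_le_OS in H. simpl in H.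
  pose proof (ord_le_trans _ _ _ A H) as H2. rewrite ord_le_OS in H2. exact H2.
Qed.

Lemma ord_one_pos : ord_lt OZ ord_one.
Proof. apply ord_lt_S. Qed.


Lemma choice' {A B : Type} (R : A -> B -> Prop) : (forall a, exists b, R a b) -> exists f, forall a, R a (f a).
Proof. intro H. exists (fun a => proj1_sig (constructive_indefinite_description _ (H a))).
  intro a. exact (proj2_sig (constructive_indefinite_description _ (H a))). Qed.

Lemma pair_surj (p : nat * nat) : exists k, Cantor.of_nat k = p.
Proof. exists (Cantor.to_nat p). apply Cantor.cancel_of_to. Qed.

Lemma archi (r : R) : 0 < r -> exists k : nat, / INR (S k) < r.
Proof.
  intro Hr. destruct (archimed (/ r)) as [H1 _].
  assert (0 < / r) by (apply Rinv_0_lt_compat; lra).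
  destruct (INR_unbounded (/ r)) as [k Hk].
  exists k. rewrite S_INR.
  assert (0 < INR k) by lra.
  apply Rlt_trans with (/ INR k).
  - apply Rinv_lt_contravar; nra.
  - rewrite <- (Rinv_inv r). apply Rinv_lt_contravar; nra.
Qed.

Lemma inv_S_pos (k : nat) : 0 < / INR (S k).
Proof. apply Rinv_0_lt_compat. apply lt_0_INR. lia. Qed.

Existing Class is_metric.
Section Sig.
Context {X : Type} {d : X -> X -> R} {Hd : is_metric d}.

Lemma d_refl x : d x x = 0.
Proof using Hd. apply (proj1 Hd). reflexivity. Qed.
Lemma d_sym x y : d x y = d y x.
Proof using Hd. apply (proj1 (proj2 Hd)). Qed.
Lemma d_tri x y z : d x z <= d x y + d y z.
Proof using Hd. apply (proj2 (proj2 Hd)). Qed.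
Lemma d_pos x y : 0 <= d x y.
Proof using Hd. pose proof (d_tri x y x). rewrite d_refl, (d_sym y x) in H. lra. Qed.

Lemma Sig_ext xi A B : Sigma0 d xi A -> (forall x, A x <-> B x) -> Sigma0 d xi B.
Proof using Hd.
  intros H E. replace B with A; auto.
  apply functional_extensionality; intro x. apply propositional_extensionality. apply E.
Qed.

Lemma mopen_ext A B : mopen d A -> (forall x, A x <-> B x) -> mopen d B.
Proof using Hd. intros H E x Bx. destruct (H x (proj2 (E x) Bx)) as [r [Hr Hr']].
  exists r. split; auto. intros y Hy. apply E. auto. Qed.

Definition inner (A : X -> Prop) (k : nat) : X -> Prop :=
  fun x => forall y, d x y < / INR (S k) -> A y.

Lemma inner_closed A k : mopen d (fun x => ~ inner A k x).
Proof using Hd.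
  intros x Hx. unfold inner in Hx. apply not_all_ex_not in Hx. destruct Hx as [y Hy].
  apply imply_to_and in Hy. destruct Hy as [H1 H2].
  exists (/ INR (S k) - d x y). split; [lra|]. intros z Hz Hi. apply H2. apply Hi.
  pose proof (d_tri z x y). rewrite (d_sym z x) in H. lra.
Qed.

Lemma open_inner A : mopen d A -> forall x, A x <-> exists k, inner A k x.
Proof using Hd.
  intros HA x. split.
  - intro Ax. destruct (HA x Ax) as [r [Hr H]]. destruct (archi r Hr) as [k Hk].
    exists k. intros y Hy. apply H. lra.
  - intros [k Hk]. apply Hk. rewrite d_refl. apply inv_S_pos.
Qed.

Lemma Sig_open xi A : ord_lt OZ xi -> mopen d A -> Sigma0 d xi A.
Proof using Hd.
  intros H1 HA. destruct (ord_total xi ord_one) as [C|C].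
  - apply Sigma0_open; auto.
  - apply Sig_ext with (fun x => exists n, ~ (fun k x => ~ inner A k x) n x).
    + apply Sigma0_union with (eta := fun _ => ord_one).
      * intros; apply ord_one_pos.
      * intros; exact C.
      * intro n. apply Sigma0_open; [apply ord_one_pos|apply ord_le_refl|]. apply inner_closed.
    + intro x. rewrite (open_inner A HA x). split; intros [n Hn]; exists n; tauto.
Qed.

Lemma Sig_low xi A : ord_le xi ord_one -> Sigma0 d xi A -> mopen d A.
Proof using Hd.
  intros C H. destruct H as [xi A _ _ HA | xi eta B H1 H2 H3].
  - exact HA.
  - exfalso. apply (ord_lt_one_bad (eta 0%nat) xi); auto.
Qed.

Lemma Sig_pos xi A : Sigma0 d xi A -> ord_lt OZ xi.
Proof using Hd. intro H. destruct H as [xi A H1 _ _ | xi eta B H1 H2 H3]; auto.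
  eapply ord_lt_trans; [apply (H1 0%nat)|apply H2]. Qed.

Lemma Sig_NF xi A : ord_lt ord_one xi -> Sigma0 d xi A ->
  exists (eta : nat -> Ord) (B : nat -> X -> Prop), (forall n, ord_lt OZ (eta n) /\ ord_lt (eta n) xi) /\
    (forall n, Sigma0 d (eta n) (B n)) /\ forall x, A x <-> exists n, ~ B n x.
Proof using Hd.
  intros C H. destruct H as [xi A H1 H2 HA | xi eta B H1 H2 H3].
  - exfalso. unfold ord_lt in C. pose proof (ord_le_trans _ _ _ C H2) as K.
    unfold ord_one in K. simpl in K. exact K.
  - exists eta, B. split; [intros; split; auto|]. split; auto. tauto.
Qed.

Lemma Sig_mono xi xi' A : Sigma0 d xi A -> ord_le xi xi' -> Sigma0 d xi' A.
Proof using Hd.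
  intros H L. pose proof (Sig_pos _ _ H) as P.
  destruct H as [xi A H1 H2 HA | xi eta B H1 H2 H3].
  - apply Sig_open; auto. eapply ord_lt_le_trans; eauto.
  - apply Sigma0_union with eta; auto. intro n. eapply ord_lt_le_trans; eauto.
Qed.

Lemma Sig_cunion xi (A : nat -> X -> Prop) : ord_lt OZ xi -> (forall n, Sigma0 d xi (A n)) ->
  Sigma0 d xi (fun x => exists n, A n x).
Proof using Hd.
  intros P H. destruct (ord_total xi ord_one) as [C|C].
  - apply Sig_open; auto. intros x [n Hn]. destruct (Sig_low _ _ C (H n) x Hn) as [r [Hr Hr']].
    exists r. split; auto. intros y Hy. exists n. auto.
  - assert (K : forall n, exists p : (nat -> Ord) * (nat -> X -> Prop),
       (forall m, ord_lt OZ (fst p m) /\ ord_lt (fst p m) xi) /\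
       (forall m, Sigma0 d (fst p m) (snd p m)) /\ forall x, A n x <-> exists m, ~ snd p m x).
    { intro n. destruct (Sig_NF _ _ C (H n)) as [eta [B HB]]. exists (eta, B). exact HB. }
    apply choice' in K. destruct K as [F HF].
    apply Sig_ext with (fun x => exists k, ~ (fun k => snd (F (fst (Cantor.of_nat k))) (snd (Cantor.of_nat k))) k x).
    + apply Sigma0_union with (eta := fun k => fst (F (fst (Cantor.of_nat k))) (snd (Cantor.of_nat k))).
      * intro k. apply (HF _). * intro k. apply (HF _). * intro k. apply (HF _).
    + intro x. split.
      * intros [k Hk]. exists (fst (Cantor.of_nat k)). apply (HF _). eauto.
      * intros [n Hn]. apply (HF n) in Hn. destruct Hn as [m Hm].
        destruct (pair_surj (n, m)) as [k Hk]. exists k. rewrite Hk. simpl. exact Hm.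
Qed.

Lemma Sig_binunion xi A B : Sigma0 d xi A -> Sigma0 d xi B -> Sigma0 d xi (fun x => A x \/ B x).
Proof using Hd.
  intros HA HB. apply Sig_ext with (fun x => exists n, (fun n => match n with O => A | _ => B end) n x).
  - apply Sig_cunion. eapply Sig_pos; eauto. intros [|n]; auto.
  - intro x. split.
    + intros [[|n] H]; auto.
    + intros [H|H]; [exists O|exists 1%nat]; auto.
Qed.

Lemma Sig_empty xi : ord_lt OZ xi -> Sigma0 d xi (fun _ => False).
Proof using Hd. intro P. apply Sig_open; auto. intros x []. Qed.

Lemma Sig_full xi : ord_lt OZ xi -> Sigma0 d xi (fun _ => True).
Proof using Hd. intro P. apply Sig_open; auto. intros x _. exists 1. split; [lra|auto]. Qed.

Lemma Sig_bininter xi A B : Sigma0 d xi A -> Sigma0 d xi B -> Sigma0 d xi (fun x => A x /\ B x).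
Proof using Hd.
  intros HA HB. pose proof (Sig_pos _ _ HA) as P.
  destruct (ord_total xi ord_one) as [C|C].
  - apply Sig_open; auto. apply Sig_low in HA; auto. apply Sig_low in HB; auto.
    intros x [Ax Bx]. destruct (HA x Ax) as [r1 [H1 H1']]. destruct (HB x Bx) as [r2 [H2 H2']].
    exists (Rmin r1 r2). split; [apply Rmin_pos; auto|]. intros y Hy.
    split; [apply H1'|apply H2']; pose proof (Rmin_l r1 r2); pose proof (Rmin_r r1 r2); lra.
  - destruct (Sig_NF _ _ C HA) as [e1 [B1 [E1 [S1 Q1]]]].
    destruct (Sig_NF _ _ C HB) as [e2 [B2 [E2 [S2 Q2]]]].
    assert (K : forall k, exists c, ord_lt OZ c /\ ord_lt c xi /\
       Sigma0 d c (fun x => B1 (fst (Cantor.of_nat k)) x \/ B2 (snd (Cantor.of_nat k)) x)).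
    { intro k. set (n := fst (Cantor.of_nat k)). set (m := snd (Cantor.of_nat k)).
      destruct (ord_total (e1 n) (e2 m)) as [L|L].
      - exists (e2 m). split; [apply E2|split; [apply E2|]].
        apply Sig_binunion; auto. eapply Sig_mono; eauto.
      - exists (e1 n). split; [apply E1|split; [apply E1|]].
        apply Sig_binunion; auto. eapply Sig_mono; eauto. apply ord_lt_le; auto. }
    apply choice' in K. destruct K as [c Hc].
    apply Sig_ext with (fun x => exists k, ~ (fun k x => B1 (fst (Cantor.of_nat k)) x \/ B2 (snd (Cantor.of_nat k)) x) k x).
    + apply Sigma0_union with c; intro k; apply Hc.
    + intro x. rewrite Q1, Q2. split.
      * intros [k Hk]. split; [exists (fst (Cantor.of_nat k))|exists (snd (Cantor.of_nat k))]; tauto.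
      * intros [[n Hn] [m Hm]]. destruct (pair_surj (n, m)) as [k Hk]. exists k. rewrite Hk. simpl. tauto.
Qed.

Lemma Sig_fininter xi (G : nat -> X -> Prop) m : ord_lt OZ xi ->
  (forall i, (i <= m)%nat -> Sigma0 d xi (G i)) -> Sigma0 d xi (fun x => forall i, (i <= m)%nat -> G i x).
Proof using Hd.
  intros P. induction m as [|m IH]; intro H.
  - apply Sig_ext with (G 0%nat). apply H; lia. intro x. split.
    + intros Hx i Hi. replace i with 0%nat by lia. auto.
    + intro Hx. apply Hx. lia.
  - apply Sig_ext with (fun x => (forall i, (i <= m)%nat -> G i x) /\ G (S m) x).
    + apply Sig_bininter. apply IH. intros; apply H; lia. apply H; lia.
    + intro x. split.
      * intros [H1 H2] i Hi. destruct (Nat.eq_dec i (S m)); subst; auto. apply H1; lia.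
      * intro Hx. split; auto.
Qed.

Lemma Pi_ext xi A B : Pi0 d xi A -> (forall x, A x <-> B x) -> Pi0 d xi B.
Proof using Hd. unfold Pi0. intros H E. eapply Sig_ext; [exact H|]. intro x; simpl; rewrite E; tauto. Qed.

Lemma Pi_mono xi xi' A : Pi0 d xi A -> ord_le xi xi' -> Pi0 d xi' A.
Proof using Hd. unfold Pi0. apply Sig_mono. Qed.

Lemma Pi_cinter xi (A : nat -> X -> Prop) : ord_lt OZ xi -> (forall n, Pi0 d xi (A n)) ->
  Pi0 d xi (fun x => forall n, A n x).
Proof using Hd.
  unfold Pi0. intros P H. eapply Sig_ext. apply (Sig_cunion xi (fun n x => ~ A n x)); auto.
  intro x. split; [intros [n Hn] C; auto|]. intro C. apply not_all_ex_not in C. exact C.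
Qed.

Lemma Pi_bininter xi A B : Pi0 d xi A -> Pi0 d xi B -> Pi0 d xi (fun x => A x /\ B x).
Proof using Hd. unfold Pi0. intros HA HB. eapply Sig_ext. apply (Sig_binunion _ _ _ HA HB). intro x; tauto. Qed.

Lemma Pi_full xi : ord_lt OZ xi -> Pi0 d xi (fun _ => True).
Proof using Hd. unfold Pi0. intro P. eapply Sig_ext. apply Sig_empty; auto. intro; tauto. Qed.

Lemma Pi_empty xi : ord_lt OZ xi -> Pi0 d xi (fun _ => False).
Proof using Hd. unfold Pi0. intro P. eapply Sig_ext. apply Sig_full; auto. intro; tauto. Qed.

Lemma Pi_closed xi A : ord_lt OZ xi -> mclosed d A -> Pi0 d xi A.
Proof using Hd. unfold Pi0, mclosed. intros. apply Sig_open; auto. Qed.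

Lemma Sig_S_of_Pi xi A : ord_lt OZ xi -> Pi0 d xi A -> Sigma0 d (OS xi) A.
Proof using Hd.
  unfold Pi0. intros P H. eapply Sig_ext.
  apply (Sigma0_union d (OS xi) (fun _ => xi) (fun _ x => ~ A x)); auto.
  intros; apply ord_lt_S. intro x. split; [intros [_ H']; tauto|intro; exists O; tauto].
Qed.

Lemma Sig_S_of_Sig xi A : Sigma0 d xi A -> Sigma0 d (OS xi) A.
Proof using Hd. intro H. eapply Sig_mono; eauto. apply ord_le_S. Qed.

Lemma Sig_S_NF xi A : ord_lt OZ xi -> Sigma0 d (OS xi) A ->
  exists B : nat -> X -> Prop, (forall n, Pi0 d xi (B n)) /\ forall x, A x <-> exists n, B n x.
Proof using Hd.
  intros P H. assert (C : ord_lt ord_one (OS xi)).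
  { unfold ord_lt, ord_one. apply ord_S_mono. exact P. }
  destruct (Sig_NF _ _ C H) as [eta [B [E [S Q]]]].
  exists (fun n x => ~ B n x). split.
  - intro n. unfold Pi0. eapply Sig_ext. eapply Sig_mono. apply S.
    destruct (E n) as [_ L]. unfold ord_lt in L. rewrite ord_le_OS in L. exact L.
    intro x; tauto.
  - exact Q.
Qed.

Lemma Sig_S_union xi (B : nat -> X -> Prop) : ord_lt OZ xi -> (forall n, Pi0 d xi (B n)) ->
  Sigma0 d (OS xi) (fun x => exists n, B n x).
Proof using Hd.
  intros P H. apply Sig_cunion. eapply ord_lt_trans; [exact P|apply ord_lt_S].
  intro n. apply Sig_S_of_Pi; auto.
Qed.

End Sig.


Definition disj {X : Type} (Q : nat -> X -> Prop) : nat -> X -> Prop :=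
  fun j x => Q j x /\ forall i, (i < j)%nat -> ~ Q i x.

Lemma disj_cover {X : Type} (Q : nat -> X -> Prop) x : (exists j, Q j x) <-> exists j, disj Q j x.
Proof.
  split; [|intros [j [H _]]; eauto].
  intros [j Hj]. induction j as [j IH] using (well_founded_induction Wf_nat.lt_wf).
  destruct (classic (exists i, (i < j)%nat /\ Q i x)) as [[i [H1 H2]]|H].
  - eapply IH; eauto.
  - exists j. split; auto. intros i Hi Qi. apply H; eauto.
Qed.

Lemma disj_disj {X : Type} (Q : nat -> X -> Prop) j j' x : disj Q j x -> disj Q j' x -> j = j'.
Proof.
  intros [H1 H2] [H3 H4]. destruct (lt_eq_lt_dec j j') as [[L|L]|L]; auto.
  - exfalso. eapply H4; eauto.
  - exfalso. eapply H2; eauto.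
Qed.

Lemma of_nat_inj p q : Cantor.of_nat p = Cantor.of_nat q -> p = q.
Proof. intro H. rewrite <- (Cantor.cancel_to_of p), <- (Cantor.cancel_to_of q), H. reflexivity. Qed.

Section DU.
Context {X : Type} {d : X -> X -> R} {Hd : is_metric d} (Hs : separable d) (Hz : zero_dimensional d).

Lemma DU xi S0 : Sigma0 d xi S0 ->
  exists T : nat -> X -> Prop, (forall j, Pi0 d xi (T j)) /\ (forall x, S0 x <-> exists j, T j x) /\
    (forall j j' x, T j x -> T j' x -> j = j').
Proof.
  intro HS. pose proof (Sig_pos _ _ HS) as P.
  destruct (ord_total xi ord_one) as [C|C].
  - apply Sig_low in HS; auto.
    destruct Hs as [s Hs'].
    set (ball := fun (p : nat) (y : X) => exists z, s (fst (Cantor.of_nat p)) = Some z /\ d z y < / INR (S (snd (Cantor.of_nat p)))).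
    assert (K : forall p, exists V : X -> Prop, mopen d V /\ mclosed d V /\ (forall y, V y -> S0 y) /\
       ((exists V', mopen d V' /\ mclosed d V' /\ (forall y, V' y -> S0 y) /\ forall y, ball p y -> V' y) ->
          forall y, ball p y -> V y)).
    { intro p. destruct (classic (exists V', mopen d V' /\ mclosed d V' /\ (forall y, V' y -> S0 y) /\ forall y, ball p y -> V' y)) as [[V HV]|N].
      - exists V. intuition.
      - exists (fun _ => False). split; [intros x []|split; [|split; [tauto|tauto]]].
        intros x _. exists 1. split; [lra|tauto]. }
    apply choice' in K. destruct K as [W HW].
    exists (disj W). split; [|split].
    + intro j. apply Pi_closed; auto. unfold mclosed. intros x Hx. unfold disj in Hx.
      apply not_and_or in Hx. destruct Hx as [Hx|Hx].
      * destruct (HW j) as [_ [Hc _]]. destruct (Hc x Hx) as [r [Hr Hr']].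
        exists r. split; auto. intros y Hy [A _]. exact (Hr' y Hy A).
      * apply not_all_ex_not in Hx. destruct Hx as [i Hi]. apply imply_to_and in Hi. destruct Hi as [Hi Wi].
        apply NNPP in Wi. destruct (HW i) as [Ho _]. destruct (Ho x Wi) as [r [Hr Hr']].
        exists r. split; auto. intros y Hy [_ A]. exact (A i Hi (Hr' y Hy)).
    + intro x. rewrite <- disj_cover. split.
      * intro Sx. destruct (Hz S0 x HS Sx) as [V [Vo [Vc [Vx VS]]]].
        destruct (Vo x Vx) as [r [Hr Hr']].
        destruct (archi (r/2)) as [k Hk]; [lra|].
        destruct (Hs' x (/ INR (S k)) (inv_S_pos k)) as [n [z [Hz1 Hz2]]].
        destruct (pair_surj (n, k)) as [p Hp].
        assert (Bp : forall y, ball p y -> V y).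
        { intros y [z' [E1 E2]]. rewrite Hp in E1, E2. cbn [fst snd] in E1, E2. rewrite Hz1 in E1.
          injection E1 as <-. apply Hr'. pose proof (@d_tri _ d _ x z y). lra. }
        exists p. apply (HW p). exists V. intuition. exists z. rewrite Hp. cbn [fst snd]. split; auto.
        rewrite (@d_sym _ d _). auto.
      * intros [j Hj]. apply (HW j). auto.
    + intros j j' x. apply disj_disj.
  - destruct (Sig_NF _ _ C HS) as [eta [B [E [SB Q]]]].
    exists (disj (fun n x => ~ B n x)). split; [|split].
    + intro j. unfold disj. apply Pi_bininter; auto.
      * eapply Pi_mono. unfold Pi0. eapply Sig_ext; [apply (SB j)|]. intro x; simpl; tauto.
        apply ord_lt_le, E.
      * apply Pi_cinter; auto. intro i. destruct (lt_dec i j) as [L|L].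
        -- eapply Pi_ext with (B i).
           ++ unfold Pi0. eapply Sig_mono; [apply (Sig_S_of_Pi (eta i)); [apply E| unfold Pi0; eapply Sig_ext; [apply (SB i)|intro; simpl; tauto]] | exact (proj2 (E i))].
           ++ intro x. split; [intros; tauto|intro H; apply NNPP; apply H; auto].
        -- eapply Pi_ext. apply Pi_full; auto. intro x; split; [intros _ H; lia|tauto].
    + intro x. rewrite Q, <- disj_cover. tauto.
    + intros j j' x. apply disj_disj.
Qed.
End DU.

Definition Meas {X Y : Type} (dX : X -> X -> R) (dY : Y -> Y -> R) xi (f : X -> Y) :=
  forall U, mopen dY U -> Sigma0 dX (OS xi) (fun x => U (f x)).

Section PL.
Context {X Y : Type} (dX : X -> X -> R) (dY : Y -> Y -> R) {HdX : is_metric dX} {HdY : is_metric dY}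
  (HsX : separable dX) (HsY : separable dY) (Hz : zero_dimensional dX).

Lemma PL xi f eps : ord_lt OZ xi -> Meas dX dY xi f -> 0 < eps ->
  exists E : nat -> X -> Prop, (forall n, Pi0 dX xi (E n)) /\ (forall x, exists n, E n x) /\
   (forall n m x, E n x -> E m x -> n = m) /\ (forall n x z, E n x -> E n z -> dY (f x) (f z) < eps).
Proof.
  intros P Hf He. destruct HsY as [s Hs].
  set (Ball := fun i y => exists c, s i = Some c /\ dY c y < eps / 2).
  assert (K : forall i, exists B : nat -> X -> Prop, (forall n, Pi0 dX xi (B n)) /\
     forall x, Ball i (f x) <-> exists n, B n x).
  { intro i. apply Sig_S_NF; auto. apply Hf. intros y [c [E1 E2]].
    exists (eps/2 - dY c y). split; [lra|]. intros y' Hy'. exists c. split; auto.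
    pose proof (@d_tri _ dY _ c y y'). lra. }
  apply choice' in K. destruct K as [B HB].
  set (Q := fun k => B (fst (Cantor.of_nat k)) (snd (Cantor.of_nat k))).
  assert (QP : forall k, Pi0 dX xi (Q k)) by (intro k; apply HB).
  assert (K2 : forall k, exists T : nat -> X -> Prop, (forall j, Pi0 dX xi (T j)) /\
     (forall x, (forall i, (i <= k)%nat -> (i < k)%nat -> ~ Q i x) <-> exists j, T j x) /\
     (forall j j' x, T j x -> T j' x -> j = j')).
  { intro k. apply (DU HsX Hz). apply Sig_fininter; auto. intros i _.
    destruct (lt_dec i k) as [L|L].
    - eapply Sig_ext. apply (QP i). intro x. split; intros; auto.
    - eapply Sig_ext. apply Sig_full; auto. intro x. split; intros; try tauto; lia. }
  apply choice' in K2. destruct K2 as [T HT].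
  exists (fun p x => Q (fst (Cantor.of_nat p)) x /\ T (fst (Cantor.of_nat p)) (snd (Cantor.of_nat p)) x).
  split; [|split; [|split]].
  - intro p. apply Pi_bininter; [apply QP|apply HT].
  - intro x. destruct (Hs (f x) (eps/2)) as [i [c [E1 E2]]]; [lra|].
    assert (Ball i (f x)) by (exists c; split; auto; rewrite (@d_sym _ dY _); auto).
    apply HB in H. destruct H as [n Hn].
    assert (exists k, Q k x) as Hk.
    { destruct (pair_surj (i, n)) as [k Hk]. exists k. unfold Q. rewrite Hk. exact Hn. }
    apply disj_cover in Hk. destruct Hk as [k [Qk Hk]].
    destruct (proj1 (proj1 (proj2 (HT k)) x) (fun i _ => Hk i)) as [j Hj].
    destruct (pair_surj (k, j)) as [p Hp]. exists p. rewrite Hp. simpl. auto.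
  - intros p q x [Q1 T1] [Q2 T2].
    assert (D1 : disj Q (fst (Cantor.of_nat p)) x).
    { split; auto. intros i Hi. apply (proj2 (proj1 (proj2 (HT _)) x) (ex_intro _ _ T1)); auto. lia. }
    assert (D2 : disj Q (fst (Cantor.of_nat q)) x).
    { split; auto. intros i Hi. apply (proj2 (proj1 (proj2 (HT _)) x) (ex_intro _ _ T2)); auto. lia. }
    pose proof (disj_disj _ _ _ _ D1 D2) as E. rewrite E in T1.
    pose proof (proj2 (proj2 (HT _)) _ _ _ T1 T2) as E'.
    apply of_nat_inj. destruct (Cantor.of_nat p), (Cantor.of_nat q). simpl in *. subst. reflexivity.
  - intros p x z [Qx _] [Qz _].
    assert (A1 : Ball (fst (Cantor.of_nat (fst (Cantor.of_nat p)))) (f x)) by (apply HB; eauto).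
    assert (A2 : Ball (fst (Cantor.of_nat (fst (Cantor.of_nat p)))) (f z)) by (apply HB; eauto).
    destruct A1 as [c1 [F1 G1]]. destruct A2 as [c2 [F2 G2]]. rewrite F1 in F2. injection F2 as <-.
    pose proof (@d_tri _ dY _ (f x) c1 (f z)). rewrite (@d_sym _ dY _ (f x) c1) in H. lra.
Qed.
End PL.


Lemma inv_S_le (n m : nat) : (n <= m)%nat -> / INR (S m) <= / INR (S n).
Proof. intro H. apply Rinv_le_contravar. apply lt_0_INR; lia. apply le_INR; lia. Qed.

Section BM.
Context {X Y : Type} {dX : X -> X -> R} {dY : Y -> Y -> R} {HdX : is_metric dX} {HdY : is_metric dY}.

Lemma cont_preim (h : X -> Y) U : is_continuous dX dY h -> mopen dY U -> mopen dX (fun x => U (h x)).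
Proof.
  intros Hc HU x Ux. destruct (HU _ Ux) as [r [Hr Hr']]. destruct (Hc x r Hr) as [s [Hs Hs']].
  exists s. split; auto.
Qed.

Lemma Baire_Meas xi f : BaireClass dX dY xi f -> Meas dX dY xi f.
Proof.
  intro H. induction H as [xi f H0 H1 H2 | xi eta fn f H0 H1 H2 H3 IH H4].
  - intros U HU. eapply Sig_mono. apply H2; auto. unfold ord_two. apply ord_S_mono. exact H0.
  - assert (P : ord_lt OZ xi) by (eapply ord_lt_trans; [apply ord_one_pos|exact H0]).
    intros U HU.
    set (V := fun k y => forall z, dY y z < / INR (S k) -> U z).
    apply Sig_ext with (fun x => exists p, (fun p x => forall n, (snd (Cantor.of_nat p) <= n)%nat -> V (fst (Cantor.of_nat p)) (fn n x)) p x).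
    + apply Sig_S_union; auto. intro p. apply Pi_cinter; auto. intro n.
      destruct (le_dec (snd (Cantor.of_nat p)) n) as [L|L].
      * eapply Pi_ext with (fun x => V (fst (Cantor.of_nat p)) (fn n x)).
        -- unfold Pi0. eapply Sig_mono. apply (IH n (fun y => ~ V (fst (Cantor.of_nat p)) y)). apply (inner_closed U). exact (H2 n).
        -- intro x. split; auto.
      * eapply Pi_ext. apply Pi_full; auto. intro x. split; intros; auto; lia.
    + intro x. split.
      * intros [p Hp]. destruct (H4 x (/ INR (S (fst (Cantor.of_nat p)))) (inv_S_pos _)) as [N HN].
        set (n := Nat.max N (snd (Cantor.of_nat p))).
        apply (Hp n). lia. apply HN. lia.
      * intro Ux. destruct (HU _ Ux) as [r [Hr Hr']]. destruct (archi (r/2)) as [k Hk]; [lra|].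
        destruct (H4 x (/ INR (S k)) (inv_S_pos _)) as [N HN].
        destruct (pair_surj (k, N)) as [p Hp]. exists p. rewrite Hp. cbn [fst snd].
        intros n Hn z Hz. apply Hr'. pose proof (HN n Hn).
        pose proof (@d_tri _ dY _ (f x) (fn n x) z). rewrite (@d_sym _ dY _ (f x) (fn n x)) in H5. lra.
Qed.

Lemma PW_Meas xi N C g : ord_lt OZ xi -> Pi_partition dX xi N C ->
  locally_on (is_continuous dX dY) N C g -> Meas dX dY xi g.
Proof.
  intros P [_ [_ [HP [_ HC]]]] [gn Hg] U HU.
  apply Sig_ext with (fun x => exists p, (fun p x => in_index N (fst (Cantor.of_nat p)) /\ C (fst (Cantor.of_nat p)) x /\
      @inner _ dX (fun z => U (gn (fst (Cantor.of_nat p)) z)) (snd (Cantor.of_nat p)) x) p x).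
  - apply Sig_S_union; auto. intro p. destruct (classic (in_index N (fst (Cantor.of_nat p)))) as [I|I].
    + eapply Pi_ext with (fun x => C (fst (Cantor.of_nat p)) x /\ @inner _ dX (fun z => U (gn (fst (Cantor.of_nat p)) z)) (snd (Cantor.of_nat p)) x).
      * apply Pi_bininter. apply HP; auto. apply Pi_closed; auto. apply inner_closed.
      * intro x; tauto.
    + eapply Pi_ext. apply Pi_empty; auto. intro x; tauto.
  - intro x. split.
    + intros [p [I [Cx Hi]]]. destruct (Hg _ I) as [_ E]. rewrite (E x Cx).
      apply Hi. rewrite (@d_refl _ dX _). apply inv_S_pos.
    + intro Ux. destruct (HC x) as [n [I Cx]]. destruct (Hg _ I) as [Hc E]. rewrite (E x Cx) in Ux.
      apply (open_inner _ (cont_preim _ _ Hc HU)) in Ux. destruct Ux as [j Hj].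
      destruct (pair_surj (n, j)) as [p Hp]. exists p. rewrite Hp. cbn [fst snd]. auto.
Qed.

Lemma UL_Meas xi fk f : ord_lt OZ xi -> uniform_cv dY fk f -> (forall k, Meas dX dY xi (fk k)) -> Meas dX dY xi f.
Proof.
  intros P Hu Hm U HU.
  assert (K : forall k : nat, exists N, forall n, (N <= n)%nat -> forall x, dY (fk n x) (f x) < / INR (S k)).
  { intro k. apply Hu. apply inv_S_pos. }
  apply choice' in K. destruct K as [Nk HN].
  set (W := fun (k : nat) y => exists r, r > 2 * / INR (S k) /\ forall z, dY y z < r -> U z).
  apply Sig_ext with (fun x => exists k, (fun k x => W k (fk (Nk k) x)) k x).
  - apply Sig_cunion. eapply ord_lt_trans; [exact P|apply ord_lt_S]. intro k. apply Hm.
    intros y [r [Hr Hr']]. exists (r - 2 * / INR (S k) ). split; [lra|].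
    intros y' Hy'. exists (r - dY y y'). split; [lra|]. intros z Hz. apply Hr'.
    pose proof (@d_tri _ dY _ y y' z). lra.
  - intro x. split.
    + intros [k [r [Hr Hr']]]. apply Hr'. pose proof (HN k (Nk k) (le_n _) x). pose proof (inv_S_pos k). lra.
    + intro Ux. destruct (HU _ Ux) as [r0 [Hr0 Hr0']]. destruct (archi (r0/4)) as [k Hk]; [lra|].
      exists k. exists (3 * / INR (S k)). pose proof (inv_S_pos k). split; [lra|].
      intros z Hz. apply Hr0'. pose proof (HN k (Nk k) (le_n _) x).
      pose proof (@d_tri _ dY _ (f x) (fk (Nk k) x) z) as T. rewrite (@d_sym _ dY _ (f x) (fk (Nk k) x)) in T. lra.
Qed.

End BM.

Lemma bounded_max (u : nat -> nat) K : (forall M, (u M <= K)%nat) -> u 0%nat = 0%nat ->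
  exists T, (exists M, u M = T) /\ forall M, (u M <= T)%nat.
Proof.
  intros H H0. induction K as [|K IH].
  - exists 0%nat. split; eauto.
  - destruct (classic (exists M, u M = S K)) as [A|A].
    + exists (S K). auto.
    + apply IH. intro M. specialize (H M). destruct (Nat.eq_dec (u M) (S K)); [exfalso; eauto|lia].
Qed.

Section Comp.
Context {X : Type} {dX : X -> X -> R} {HdX : is_metric dX}.
Variable (xi : Ord) (E : nat -> X -> Prop).
Hypothesis (HP : forall n, Pi0 dX xi (E n)) (Hcov : forall x, exists n, E n x)
  (Hdis : forall n m x, E n x -> E m x -> n = m) (Hne : inhabited X).

Definition ind (m : nat) : nat := if excluded_middle_informative (exists x, E m x) then 1%nat else 0%nat.
Fixpoint rank (m : nat) : nat := match m with O => O | S m => (rank m + ind m)%nat end.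

Lemma rank_mono m m' : (m <= m')%nat -> (rank m <= rank m')%nat.
Proof. induction 1; auto. simpl. lia. Qed.

Lemma ind_ne m : (exists x, E m x) -> ind m = 1%nat.
Proof. unfold ind. destruct (excluded_middle_informative _); tauto. Qed.

Lemma rank_inj m m' : (exists x, E m x) -> (exists x, E m' x) -> rank m = rank m' -> m = m'.
Proof.
  intros A B H. destruct (lt_eq_lt_dec m m') as [[L|L]|L]; auto.
  - pose proof (rank_mono (S m) m' L). simpl in H0. rewrite ind_ne in H0; auto. lia.
  - pose proof (rank_mono (S m') m L). simpl in H0. rewrite ind_ne in H0; auto. lia.
Qed.

Lemma rank_hit M n : (n < rank M)%nat -> exists m, (m < M)%nat /\ (exists x, E m x) /\ rank m = n.
Proof.
  induction M as [|M IH]; simpl; intro H; [lia|].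
  destruct (lt_dec n (rank M)) as [L|L].
  - destruct (IH L) as [m [H1 H2]]. exists m. split; auto.
  - unfold ind in H. destruct (excluded_middle_informative _) as [A|A]; [|lia].
    exists M. split; [lia|split; auto; lia].
Qed.

Definition Cc (n : nat) (x : X) : Prop := exists m, rank m = n /\ E m x.

Lemma Cc_E n m : (exists x, E m x) -> rank m = n -> forall x, Cc n x <-> E m x.
Proof.
  intros A B x. split.
  - intros [m' [H1 H2]]. replace m with m'; auto. apply rank_inj; eauto. congruence.
  - intro H. exists m; auto.
Qed.

Lemma compress : exists N C, Pi_partition dX xi N C /\
  forall n, in_index N n -> exists m, forall x, C n x <-> E m x.
Proof.
  destruct Hne as [x0].
  assert (G : forall n, (exists M, (n < rank M)%nat) -> exists m, forall x, Cc n x <-> E m x).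
  { intros n [M HM]. destruct (rank_hit M n HM) as [m [_ [A B]]]. exists m. apply Cc_E; auto. }
  assert (Gne : forall n, (exists M, (n < rank M)%nat) -> exists x, Cc n x).
  { intros n [M HM]. destruct (rank_hit M n HM) as [m [_ [[x A] B]]]. exists x, m; auto. }
  assert (Gd : forall n m x, Cc n x -> Cc m x -> n = m).
  { intros n m x [a [A1 A2]] [b [B1 B2]]. rewrite <- A1, <- B1. f_equal. eauto. }
  assert (GP : forall n, (exists M, (n < rank M)%nat) -> Pi0 dX xi (Cc n)).
  { intros n H. destruct (G n H) as [m Hm]. eapply Pi_ext. apply (HP m). intro x. rewrite Hm. tauto. }
  assert (Gcov : forall x, exists m, Cc (rank m) x /\ (rank m < rank (S m))%nat).
  { intro x. destruct (Hcov x) as [m Hm]. exists m. split. exists m; auto.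
    simpl. rewrite ind_ne; eauto. lia. }
  destruct (classic (exists K, forall M, (rank M <= K)%nat)) as [[K HK]|HK].
  - destruct (bounded_max rank K HK eq_refl) as [T [[M0 HM0] HT]].
    exists (Some T), Cc. simpl.
    assert (Hin : forall n, (n < T)%nat -> exists M, (n < rank M)%nat).
    { intros n Hn. exists M0. lia. }
    split; [split; [|split; [|split; [|split]]]|].
    + destruct (Gcov x0) as [m [_ Hm]]. specialize (HT (S m)). simpl. lia.
    + intros n Hn. apply Gne; simpl in Hn; auto.
    + intros n Hn. apply GP; simpl in Hn; auto.
    + intros n m x _ _. apply Gd.
    + intro x. destruct (Gcov x) as [m [Hm L]]. exists (rank m). split; auto. specialize (HT (S m)). simpl; lia.
    + intros n Hn. apply G; auto.
  - assert (Hin : forall n, exists M, (n < rank M)%nat).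
    { intro n. apply NNPP. intro C. apply HK. exists n. intro M. apply not_lt. intro L. apply C. eauto. }
    exists None, Cc. split; [split; [|split; [|split; [|split]]]|].
    + exact I.
    + intros n _. apply Gne; auto.
    + intros n _. apply GP; auto.
    + intros n m x _ _. apply Gd.
    + intro x. destruct (Gcov x) as [m [Hm L]]. exists (rank m). split; [exact I|auto].
    + intros n _. apply G; auto.
Qed.
End Comp.


Section Simple.
Context {X : Type} {dX : X -> X -> R} {HdX : is_metric dX}.

Definition Delta z (A : X -> Prop) := Sigma0 dX (OS z) A /\ Sigma0 dX (OS z) (fun x => ~ A x).
Definition simple z (h : X -> nat * nat) := forall P : nat * nat -> Prop, Delta z (fun x => P (h x)).

Variable z : Ord. Hypothesis Hz : ord_lt OZ z.
Lemma Hz' : ord_lt OZ (OS z).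
Proof using Hz. eapply ord_lt_trans; [exact Hz|apply ord_lt_S]. Qed.

Lemma Delta_ext A B : Delta z A -> (forall x, A x <-> B x) -> Delta z B.
Proof using HdX. intros [H1 H2] E. split; [eapply Sig_ext; [exact H1|]|eapply Sig_ext; [exact H2|]]; intro x; simpl; rewrite E; tauto. Qed.

Lemma Delta_const (Q : Prop) : Delta z (fun _ => Q).
Proof using HdX Hz.
  destruct (classic Q) as [q|q].
  - split; eapply Sig_ext; [apply Sig_full, Hz'| |apply Sig_empty, Hz'|]; intro; simpl; tauto.
  - split; eapply Sig_ext; [apply Sig_empty, Hz'| |apply Sig_full, Hz'|]; intro; simpl; tauto.
Qed.

Lemma Delta_Sig A : Sigma0 dX z A -> Delta z A.
Proof using HdX Hz.
  intro H. split. apply Sig_S_of_Sig; auto. apply Sig_S_of_Pi; auto. unfold Pi0.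
  eapply Sig_ext; [exact H|]. intro; simpl; tauto.
Qed.

Lemma Delta_and A B : Delta z A -> Delta z B -> Delta z (fun x => A x /\ B x).
Proof using HdX Hz.
  intros [A1 A2] [B1 B2]. split.
  - apply Sig_bininter; auto.
  - eapply Sig_ext. apply (Sig_binunion _ _ _ A2 B2). intro x; simpl; tauto.
Qed.

Lemma Delta_or A B : Delta z A -> Delta z B -> Delta z (fun x => A x \/ B x).
Proof using HdX Hz.
  intros [A1 A2] [B1 B2]. split.
  - apply Sig_binunion; auto.
  - eapply Sig_ext. apply (Sig_bininter _ _ _ A2 B2). intro x; simpl; tauto.
Qed.

Lemma Delta_not A : Delta z A -> Delta z (fun x => ~ A x).
Proof using HdX. intros [A1 A2]. split; auto. eapply Sig_ext; [exact A1|]. intro; simpl; tauto. Qed.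

Lemma simple_const s : simple z (fun _ => s).
Proof using HdX Hz. intro P. apply Delta_const. Qed.

Lemma simple_ext h h' : simple z h -> (forall x, h x = h' x) -> simple z h'.
Proof using HdX. intros H E P. eapply Delta_ext. apply (H P). intro x. simpl. rewrite E. tauto. Qed.

Lemma simple_ite (A : X -> Prop) h1 h2 : Delta z A -> simple z h1 -> simple z h2 ->
  simple z (fun x => if excluded_middle_informative (A x) then h1 x else h2 x).
Proof using HdX Hz.
  intros HA H1 H2 P. eapply Delta_ext.
  apply (Delta_or _ _ (Delta_and _ _ HA (H1 P)) (Delta_and _ _ (Delta_not _ HA) (H2 P))).
  intro x. destruct (excluded_middle_informative (A x)); tauto.
Qed.
End Simple.

Lemma fin_max (Q : nat -> nat -> Prop) N : (forall c, (c < N)%nat -> exists M, forall m, (M <= m)%nat -> Q c m) ->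
  exists M, forall m, (M <= m)%nat -> forall c, (c < N)%nat -> Q c m.
Proof.
  induction N as [|N IH]; intro H.
  - exists O. intros; lia.
  - destruct IH as [M1 H1]. intros c Hc. apply H; lia.
    destruct (H N (le_n _)) as [M2 H2]. exists (Nat.max M1 M2). intros m Hm c Hc.
    destruct (Nat.eq_dec c N); subst. apply H2; lia. apply H1; lia.
Qed.

Definition ek i := fst (Cantor.of_nat (fst (Cantor.of_nat i))).
Definition en i := snd (Cantor.of_nat (fst (Cantor.of_nat i))).
Definition ej i := snd (Cantor.of_nat i).

Lemma e_surj k n j : exists i, ek i = k /\ en i = n /\ ej i = j.
Proof. exists (Cantor.to_nat (Cantor.to_nat (k, n), j)). unfold ek, en, ej.
  rewrite !Cantor.cancel_of_to. cbn [fst snd]. rewrite !Cantor.cancel_of_to. auto. Qed.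

Section Constr.
Context {X Y : Type} {dX : X -> X -> R} {dY : Y -> Y -> R} {HdX : is_metric dX} {HdY : is_metric dY}.
Variable xi : Ord. Hypothesis Hxi1 : ord_lt ord_one xi.
Variable f : X -> Y. Variable y0 : Y.
Variable Pk : nat -> nat -> X -> Prop.
Hypothesis PkP : forall k n, Pi0 dX xi (Pk k n).
Hypothesis Pkcov : forall k x, exists n, Pk k n x.
Hypothesis Pkdis : forall k n n' x, Pk k n x -> Pk k n' x -> n = n'.
Hypothesis Pkdiam : forall k n x z, Pk k n x -> Pk k n z -> dY (f x) (f z) < / INR (S k).

Fixpoint L (k n : nat) : X -> Prop :=
  match k with
  | O => fun _ => n = O
  | S k => fun x => L k (fst (Cantor.of_nat n)) x /\ Pk k (snd (Cantor.of_nat n)) x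
  end.

Lemma xi_pos : ord_lt OZ xi.
Proof using Hxi1. eapply ord_lt_trans; [apply ord_one_pos|exact Hxi1]. Qed.

Lemma LP k n : Pi0 dX xi (L k n).
Proof using HdX Hxi1 PkP.
  pose proof xi_pos as P. revert n. induction k as [|k IH]; intro n; simpl.
  - destruct (Nat.eq_dec n 0) as [E|E].
    + eapply Pi_ext. apply Pi_full; auto. intro; tauto.
    + eapply Pi_ext. apply Pi_empty; auto. intro; tauto.
  - apply Pi_bininter; auto.
Qed.

Lemma Lcov k x : exists n, L k n x.
Proof using Pkcov.
  induction k as [|k [n IH]]; simpl. exists O; auto.
  destruct (Pkcov k x) as [p Hp]. destruct (pair_surj (n, p)) as [q Hq]. exists q. rewrite Hq. simpl. auto.
Qed.

Lemma Ldis k n n' x : L k n x -> L k n' x -> n = n'.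
Proof using Pkdis.
  revert n n'. induction k as [|k IH]; simpl; intros n n' A B.
  - congruence.
  - destruct A as [A1 A2], B as [B1 B2]. apply of_nat_inj.
    rewrite (surjective_pairing (Cantor.of_nat n)), (surjective_pairing (Cantor.of_nat n')).
    f_equal; eauto.
Qed.

Variable Bf : nat -> nat -> nat -> X -> Prop.
Variable etaf : nat -> nat -> nat -> Ord.
Hypothesis Beta : forall k n j, ord_lt OZ (etaf k n j) /\ ord_lt (etaf k n j) xi.
Hypothesis BS : forall k n j, Sigma0 dX (etaf k n j) (Bf k n j).
Hypothesis BL : forall k n x, L k n x <-> forall j, Bf k n j x.
Variable th : nat -> Ord.
Hypothesis thlt : forall m, ord_lt (th m) xi.
Hypothesis thone : forall m, ord_le ord_one (th m).
Hypothesis thbound : forall m i, (i <= m)%nat -> ord_le (etaf (ek i) (en i) (ej i)) (th m).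
Variable W : nat -> nat -> X.
Hypothesis HW : forall k n, (exists z, L k n z) -> L k n (W k n).
Hypothesis IH : forall m g, Meas dX dY (th m) g -> BaireClass dX dY (th m) g.

Lemma thpos m : ord_lt OZ (th m).
Proof using thone. eapply ord_lt_le_trans; [apply ord_one_pos|apply thone]. Qed.

Definition Am m k n (x : X) : Prop :=
  forall i, (i <= m)%nat -> ek i = k -> en i = n -> Bf k n (ej i) x.

Lemma AmS m k n : Sigma0 dX (th m) (Am m k n).
Proof using HdX BS thbound thone.
  apply Sig_fininter; [apply thpos|]. intros i Hi.
  destruct (classic (ek i = k /\ en i = n)) as [[E1 E2]|E].
  - eapply Sig_ext. eapply Sig_mono. apply (BS k n (ej i)).
    rewrite <- E1, <- E2. apply thbound; auto. intro x. split; [intros H _ _; exact H|intro H; apply H; auto].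
  - eapply Sig_ext. apply Sig_full, thpos. intro x. split; auto. intros _ E1 E2. tauto.
Qed.

Lemma L_Am m k n x : L k n x -> Am m k n x.
Proof using BL. intros H i _ _ _. apply BL. exact H. Qed.

Definition cond m k i c x := fst (Cantor.of_nat c) = i /\ Am m (S k) c x.

Fixpoint scan m k i x c r : nat * nat :=
  match r with
  | O => (k, i)
  | S r => if excluded_middle_informative (cond m k i c x) then (S k, c) else scan m k i x (S c) r
  end.

Definition step m x (s : nat * nat) := scan m (fst s) (snd s) x O (S m).
Definition desc m x := Nat.iter m (step m x) (O, O).

Fixpoint val (k n : nat) : Y :=
  match k with
  | O => if excluded_middle_informative (exists z, L O n z) then f (W O n) else y0
  | S k' => if excluded_middle_informative (exists z, L (S k') n z) then f (W (S k') n) else val k' (fst (Cantor.of_nat n))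
  end.

Definition g m x := val (fst (desc m x)) (snd (desc m x)).

Lemma scan_simple m (H : nat * nat -> X -> nat * nat) :
  (forall s, simple (dX := dX) (th m) (H s)) ->
  forall k i r c, simple (dX := dX) (th m) (fun x => H (scan m k i x c r) x).
Proof using HdX BS thbound thone.
  intros HH k i r. induction r as [|r IHr]; intro c; simpl.
  - apply HH.
  - eapply simple_ext.
    apply (simple_ite (th m) (thpos m) (cond m k i c) (H (S k, c)) (fun x => H (scan m k i x (S c) r) x)).
    + apply Delta_and. apply thpos. apply Delta_const, thpos. apply Delta_Sig. apply thpos. apply AmS.
    + apply HH.
    + apply IHr.
    + intro x. simpl. destruct (excluded_middle_informative (cond m k i c x)); reflexivity.
Qed.

Lemma iter_simple m : forall t s, simple (dX := dX) (th m) (fun x => Nat.iter t (step m x) s).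
Proof using HdX BS thbound thone.
  induction t as [|t IHt]; intro s.
  - exact (simple_const (th m) (thpos m) s).
  - eapply simple_ext.
    apply (scan_simple m (fun s' x => Nat.iter t (step m x) s') (fun s' => IHt s') (fst s) (snd s) (S m) O).
    intro x. rewrite Nat.iter_succ_r. reflexivity.
Qed.

Lemma g_Meas m : Meas dX dY (th m) (g m).
Proof using HdX BS thbound thone.
  intros U HU. apply (iter_simple m m (O, O) (fun s => U (val (fst s) (snd s)))).
Qed.

Lemma scan_found m k i x cs : forall r c, (c <= cs)%nat -> (cs < c + r)%nat -> cond m k i cs x ->
  (forall c', (c <= c')%nat -> (c' < cs)%nat -> ~ cond m k i c' x) -> scan m k i x c r = (S k, cs).
Proof.
  induction r as [|r IHr]; intros c H1 H2 H3 H4; [lia|]. simpl.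
  destruct (excluded_middle_informative (cond m k i c x)) as [C|C].
  - destruct (Nat.eq_dec c cs); subst; auto. exfalso. apply (H4 c); auto; lia.
  - destruct (Nat.eq_dec c cs); subst; [contradiction|]. apply IHr; try lia; auto.
    intros c' A B. apply H4; lia.
Qed.

Lemma scan_shape m k i x : forall r c, scan m k i x c r = (k, i) \/
  exists c', scan m k i x c r = (S k, c') /\ fst (Cantor.of_nat c') = i.
Proof.
  induction r as [|r IHr]; intro c; simpl; auto.
  destruct (excluded_middle_informative (cond m k i c x)) as [C|C]; auto.
  right. exists c. split; auto. apply C.
Qed.

Definition anc d n := Nat.iter d (fun n => fst (Cantor.of_nat n)) n.

Lemma anc_S d n : anc (S d) n = anc d (fst (Cantor.of_nat n)).
Proof. unfold anc. apply Nat.iter_succ_r. Qed.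

Lemma L_anc k : forall d n z, L (k + d) n z -> L k (anc d n) z.
Proof.
  induction d as [|d IHd]; intros n z H.
  - rewrite Nat.add_0_r in H. exact H.
  - rewrite anc_S. apply IHd. rewrite Nat.add_succ_r in H. simpl in H. apply H.
Qed.

Lemma val_anc k : forall d n, (exists z, L k (anc d n) z) -> exists z, L k (anc d n) z /\ val (k + d) n = f z.
Proof using HW.
  induction d as [|d IHd]; intros n H.
  - simpl in *. rewrite Nat.add_0_r. exists (W k n). split. apply HW; auto.
    destruct k; simpl; destruct (excluded_middle_informative _) as [A|A]; auto; contradiction.
  - assert (K : forall z, L (S (k + d)) n z -> L k (anc d (fst (Cantor.of_nat n))) z).
    { intros z Hz. rewrite <- anc_S. apply (L_anc k (S d)). rewrite Nat.add_succ_r. exact Hz. }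
    rewrite anc_S in *. rewrite Nat.add_succ_r. cbn [val].
    destruct (excluded_middle_informative _) as [A|A].
    + exists (W (S (k + d)) n). split; auto.
    + apply IHd; auto.
Qed.

Lemma conv : pointwise_cv dY g f.
Proof using HdX HdY Pkdis Pkcov Pkdiam BL HW.
  intros x e He.
  assert (Kt : forall k, exists n, L k n x) by (intro k; apply Lcov).
  apply choice' in Kt. destruct Kt as [t Ht].
  assert (t0 : t O = O) by (apply (Ht O)).
  assert (tS : forall k, fst (Cantor.of_nat (t (S k))) = t k).
  { intro k. apply (Ldis k _ _ x). apply (Ht (S k)). apply Ht. }
  assert (C1 : forall k, exists M, forall m, (M <= m)%nat -> Nat.iter k (step m x) (O, O) = (k, t k) /\ (k <= m)%nat).
  { induction k as [|k [M HM]].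
    - exists O. intros m _. rewrite t0. split; auto; lia.
    - destruct (fin_max (fun c m => fst (Cantor.of_nat c) = t k -> ~ Am m (S k) c x) (t (S k))) as [M2 HM2].
      { intros c Hc. assert (Lc : ~ L (S k) c x).
        { intro Lc. pose proof (Ldis _ _ _ _ Lc (Ht (S k))). lia. }
        rewrite BL in Lc. apply not_all_ex_not in Lc. destruct Lc as [j Hj].
        destruct (e_surj (S k) c j) as [i [E1 [E2 E3]]]. exists i. intros m Hm _ HA.
        apply Hj. rewrite <- E3. apply HA; auto. }
      exists (Nat.max M (Nat.max M2 (S (t (S k) + k)))). intros m Hm.
      destruct (HM m ltac:(lia)) as [HI _]. split; [|lia].
      rewrite Nat.iter_succ, HI. unfold step. cbn [fst snd].
      apply scan_found; try lia.
      + split. apply tS. apply L_Am, Ht.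
      + intros c' _ Hc' [A B]. apply (HM2 m ltac:(lia) c' Hc' A B). }
  destruct (archi e He) as [k Hk].
  destruct (C1 (S k)) as [M HM]. exists M. intros m Hm.
  destruct (HM m Hm) as [HI Hle].
  assert (Inv : forall r, exists d, fst (Nat.iter r (step m x) (S k, t (S k))) = (S k + d)%nat /\
                 anc d (snd (Nat.iter r (step m x) (S k, t (S k)))) = t (S k)).
  { induction r as [|r [d [D1 D2]]].
    - exists O. simpl. rewrite Nat.add_0_r. auto.
    - rewrite Nat.iter_succ. set (s := Nat.iter r (step m x) (S k, t (S k))) in *.
      unfold step. destruct (scan_shape m (fst s) (snd s) x (S m) O) as [E|[c' [E1 E2]]].
      + rewrite E. simpl. eauto.
      + rewrite E1. simpl. exists (S d). split. lia. rewrite anc_S, E2. auto. }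
  assert (Ed : desc m x = Nat.iter (m - S k) (step m x) (S k, t (S k))).
  { unfold desc. rewrite <- HI, <- Nat.iter_add. f_equal. lia. }
  unfold g. rewrite Ed.
  destruct (Inv (m - S k)%nat) as [d [D1 D2]]. rewrite D1.
  destruct (val_anc (S k) d (snd (Nat.iter (m - S k) (step m x) (S k, t (S k))))) as [z [Hz Ez]].
  { rewrite D2. exists x. apply Ht. }
  rewrite Ez. rewrite D2 in Hz.
  assert (Lx : L (S k) (t (S k)) x) by apply Ht.
  simpl in Hz, Lx. destruct Hz as [_ Hz]. destruct Lx as [_ Lx].
  pose proof (Pkdiam _ _ _ _ Hz Lx). lra.
Qed.

Lemma constr : BaireClass dX dY xi f.
Proof using All.
  exact (Baire_lim dX dY xi th g f Hxi1 (fun m => thpos m) thlt (fun m => IH m (g m) (g_Meas m)) conv).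
Qed.
End Constr.


Section Main.
Context {X Y : Type} {dX : X -> X -> R} {dY : Y -> Y -> R} {HdX : is_metric dX} {HdY : is_metric dY}.
Variables (HsX : separable dX) (HsY : separable dY) (Hz : zero_dimensional dX) (Hne : inhabited X).

Lemma Meas_Baire : forall xi, ord_lt OZ xi -> forall f, Meas dX dY xi f -> BaireClass dX dY xi f.
Proof using All.
  intro xi. induction xi as [xi IHx] using (well_founded_induction ord_wf). intros P f Hf.
  destruct (ord_total xi ord_one) as [C|C].
  - apply Baire_one; auto. intros U HU. eapply Sig_mono. apply Hf; auto. unfold ord_two. apply ord_S_mono. exact C.
  - destruct Hne as [x0].
    assert (K : forall k, exists E : nat -> X -> Prop, (forall n, Pi0 dX xi (E n)) /\ (forall x, exists n, E n x) /\
      (forall n m x, E n x -> E m x -> n = m) /\ (forall n x z, E n x -> E n z -> dY (f x) (f z) < / INR (S k))).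
    { intro k. apply PL; auto. apply inv_S_pos. }
    apply choice' in K. destruct K as [Pk HPk].
    assert (PkP : forall k n, Pi0 dX xi (Pk k n)) by (intros; apply HPk).
    assert (Pkcov : forall k x, exists n, Pk k n x) by (intros; apply HPk).
    assert (Pkdis : forall k n n' x, Pk k n x -> Pk k n' x -> n = n') by (intros k; apply HPk).
    assert (Pkdiam : forall k n x z, Pk k n x -> Pk k n z -> dY (f x) (f z) < / INR (S k)) by (intros k; apply HPk).
    assert (K2 : forall p : nat * nat, exists q : (nat -> Ord) * (nat -> X -> Prop),
      (forall j, ord_lt OZ (fst q j) /\ ord_lt (fst q j) xi) /\ (forall j, Sigma0 dX (fst q j) (snd q j)) /\
      forall x, L Pk (fst p) (snd p) x <-> forall j, snd q j x).
    { intro p. pose proof (LP xi C Pk PkP (fst p) (snd p)) as H. unfold Pi0 in H.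
      destruct (Sig_NF _ _ C H) as [eta [B [E1 [E2 E3]]]]. exists (eta, B). cbn [fst snd].
      split; auto. split; auto. intro x. specialize (E3 x). split.
      - intros Lx j. apply NNPP. intro Nb. apply E3; eauto.
      - intros Hj. apply NNPP. intro Nl. apply E3 in Nl. destruct Nl as [j Nj]. auto. }
    apply choice' in K2. destruct K2 as [Q HQ].
    set (etaf := fun k n j => fst (Q (k, n)) j). set (Bf := fun k n j => snd (Q (k, n)) j).
    assert (K3 : forall m, exists c, ord_lt c xi /\ ord_le ord_one c /\
       forall i, (i <= m)%nat -> ord_le (etaf (ek i) (en i) (ej i)) c).
    { apply ord_bound_fin; auto. intro i. apply (HQ (ek i, en i)). }
    apply choice' in K3. destruct K3 as [th Hth].
    assert (K4 : forall p : nat * nat, exists z, (exists z', L Pk (fst p) (snd p) z') -> L Pk (fst p) (snd p) z).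
    { intro p. destruct (classic (exists z', L Pk (fst p) (snd p) z')) as [[z Hz']|N].
      - exists z; auto. - exists x0; tauto. }
    apply choice' in K4. destruct K4 as [W0 HW0].
    apply (constr xi C f (f x0) Pk PkP Pkcov Pkdis Pkdiam Bf etaf) with (th := th) (W := fun k n => W0 (k, n)).
    + intros k n j. apply (HQ (k, n)).
    + intros k n j. apply (HQ (k, n)).
    + intros k n x. apply (HQ (k, n)).
    + intro m; apply Hth.
    + intro m; apply Hth.
    + intros m i Hi; apply Hth; auto.
    + intros k n. apply (HW0 (k, n)).
    + intros m g Hg. apply IHx. apply Hth. eapply ord_lt_le_trans; [apply ord_one_pos|apply Hth]. exact Hg.
Qed.

Lemma Meas_ULP xi f : ord_lt OZ xi -> Meas dX dY xi f -> unif_limit_piecewise dX dY xi is_constant f.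
Proof using All.
  intros P Hf. destruct Hne as [x0].
  assert (K : forall k, exists fk : X -> Y, (forall x, dY (fk x) (f x) < / INR (S k)) /\
    exists N C, Pi_partition dX xi N C /\ locally_on is_constant N C fk).
  { intro k. destruct (@PL _ _ dX dY _ _ HsX HsY Hz xi f (/ INR (S k)) P Hf (inv_S_pos k)) as [E [EP [Ecov [Edis Ediam]]]].
    destruct (compress xi E EP Ecov Edis Hne) as [N [C [HC HCE]]].
    assert (Kw : forall m, exists z, (exists z', E m z') -> E m z).
    { intro m. destruct (classic (exists z', E m z')) as [[z Hz']|Nz]. exists z; auto. exists x0; tauto. }
    apply choice' in Kw. destruct Kw as [w Hw].
    apply choice' in Ecov. destruct Ecov as [idx Hidx].
    assert (Km : forall n, exists m, in_index N n -> forall x, C n x <-> E m x).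
    { intro n. destruct (classic (in_index N n)) as [I|I].
      - destruct (HCE n I) as [m Hm]. exists m; auto.
      - exists O. tauto. }
    apply choice' in Km. destruct Km as [mC HmC].
    exists (fun x => f (w (idx x))). split.
    - intro x. apply Ediam with (idx x); auto. apply Hw. exists x; auto.
    - exists N, C. split; auto. exists (fun n _ => f (w (mC n))). intros n I. split.
      + exists (f (w (mC n))). auto.
      + intros x Cx. f_equal. f_equal. apply Edis with x; auto. apply HmC; auto. }
  apply choice' in K. destruct K as [fk Hfk].
  exists fk. split.
  - intros e He. destruct (archi e He) as [k Hk]. exists k. intros n Hn x.
    pose proof (proj1 (Hfk n) x). pose proof (inv_S_le k n Hn). lra.
  - intro k. apply Hfk.
Qed.

Lemma ULP_Baire xi (Pp : (X -> Y) -> Prop) f : ord_lt OZ xi -> (forall g, Pp g -> is_continuous dX dY g) ->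
  unif_limit_piecewise dX dY xi Pp f -> BaireClass dX dY xi f.
Proof using All.
  intros P HP [fk [Hu Hk]]. apply Meas_Baire; auto.
  apply (UL_Meas xi fk f P Hu). intro k. destruct (Hk k) as [N [C [HC [gn Hg]]]].
  apply (PW_Meas xi N C (fk k) P HC). exists gn. intros n I. destruct (Hg n I) as [A B]. split; auto.
Qed.

Lemma Baire_ULP xi (Pp : (X -> Y) -> Prop) f : ord_lt OZ xi -> (forall g, is_constant g -> Pp g) ->
  BaireClass dX dY xi f -> unif_limit_piecewise dX dY xi Pp f.
Proof using All.
  intros P HP H. destruct (Meas_ULP xi f P (Baire_Meas xi f H)) as [fk [Hu Hk]].
  exists fk. split; auto. intro k. destruct (Hk k) as [N [C [HC [gn Hg]]]].
  exists N, C. split; auto. exists gn. intros n I. destruct (Hg n I). split; auto.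
Qed.

Lemma const_lip g : is_constant g -> is_lipschitz dX dY g.
Proof using HdY. intros [y Hy]. exists 0. split; [lra|]. intros x x'. rewrite !Hy, (@d_refl _ dY _). lra. Qed.

Lemma lip_cont g : is_lipschitz dX dY g -> is_continuous dX dY g.
Proof using HdX HdY.
  intros [L [HL Hg]] x e He. exists (e / (L + 1)). split.
  - apply Rdiv_lt_0_compat; lra.
  - intros x' Hx'. specialize (Hg x x'). pose proof (@d_pos _ dX _ x x').
    assert (L * dX x x' <= L * (e / (L + 1))) by (apply Rmult_le_compat_l; lra).
    assert (L * (e / (L + 1)) < e).
    { apply Rmult_lt_reg_r with (L + 1); [lra|]. unfold Rdiv. replace (L * (e * / (L + 1)) * (L + 1)) with (L * e * ((L + 1) * / (L + 1))) by ring. rewrite Rinv_r; nra. }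
    lra.
Qed.

End Main.

Theorem mainTheorem13 (X Y : Type) (dX : X -> X -> R) (dY : Y -> Y -> R)
  (HdX : is_metric dX) (HdY : is_metric dY)
  (HsX : separable dX) (HsY : separable dY)
  (Hzd : zero_dimensional dX) (Hne : inhabited X)
  (xi : Ord) (Hxi : ord_lt OZ xi) (f : X -> Y) :
  (BaireClass dX dY xi f <-> unif_limit_piecewise dX dY xi is_constant f) /\
  (BaireClass dX dY xi f <-> unif_limit_piecewise dX dY xi (is_lipschitz dX dY) f) /\
  (BaireClass dX dY xi f <-> unif_limit_piecewise dX dY xi (is_continuous dX dY) f).
Proof.
  split; [|split]; split.
  - apply Baire_ULP; auto.
  - apply ULP_Baire; auto. intros g Hg. apply lip_cont, const_lip; auto.
  - apply Baire_ULP; auto. apply const_lip.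
  - apply ULP_Baire; auto. apply lip_cont.
  - apply Baire_ULP; auto. intros g Hg. apply lip_cont, const_lip; auto.
  - apply ULP_Baire; auto.
Qed.
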